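(* Let $(A,\mathfrak m)$ and $(B,\mathfrak n)$ be Noetherian local rings and let $f:A\to B$ be a local ring homomorphism satisfying going-down. Then: (a) $\operatorname{cdim}(B)\le\operatorname{cdim}(A)+\operatorname{cdim}(B/\mathfrak mB)$; (b) if $B/\mathfrak mB$ is regular, then $\operatorname{cdim}(B)\le\operatorname{cdim}(A)$.
   Context: For a Noetherian local ring $(R,\mathfrak r)$, $\operatorname{edim}(R)=\dim_{R/\mathfrak r}(\mathfrak r/\mathfrak r^2)$ and $\operatorname{cdim}(R):=\operatorname{edim}(R)-\dim(R)$, with $\dim$ the Krull dimension. $\mathfrak mB=f(\mathfrak m)B$. A ring homomorphism $h:R\to S$ satisfies going-down if for primes $p\subseteq q$ of $R$ and any prime $Q$ of $S$ lying over $q$ there is a prime $P\subseteq Q$ of $S$ lying over $p$. *)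

(* Defs.v *)
From HB Require Import structures.
From mathcomp Require Import all_boot all_order all_algebra.
Set Implicit Arguments. Unset Strict Implicit. Unset Printing Implicit Defensive.
Import Order.TTheory GRing.Theory Num.Theory.
Local Open Scope ring_scope.

Section CommAlg.
Variable R : comNzRingType.

Definition subset_of (I J : R -> Prop) := forall x, I x -> J x.

Definition is_ideal (I : R -> Prop) : Prop :=
  [/\ I 0, (forall x y, I x -> I y -> I (x + y)) &
      (forall r x, I x -> I (r * x))].

Definition proper_ideal (I : R -> Prop) := is_ideal I /\ ~ I 1.

Definition prime_ideal (P : R -> Prop) : Prop :=
  proper_ideal P /\ (forall a b, P (a * b) -> P a \/ P b).

Definition maximal_ideal (M : R -> Prop) : Prop :=
  proper_ideal M /\
  (forall J, proper_ideal J -> subset_of M J -> subset_of J M).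

Definition local_ring (m : R -> Prop) : Prop :=
  maximal_ideal m /\ (forall M, maximal_ideal M -> forall x, M x <-> m x).

Definition gen_by (s : seq R) (x : R) : Prop :=
  exists r : seq R, size r = size s /\
    x = \sum_(i < size s) r`_i * s`_i.

Definition noetherian : Prop :=
  forall I, is_ideal I -> exists s : seq R, forall x, I x <-> gen_by s x.

Definition prod_ideal (I J : R -> Prop) (x : R) : Prop :=
  exists s : seq (R * R), (forall p, p \in s -> I p.1 /\ J p.2) /\
    x = \sum_(p <- s) p.1 * p.2.

Definition prime_chain (P : nat -> R -> Prop) (n : nat) : Prop :=
  (forall i, (i <= n)%N -> prime_ideal (P i)) /\
  (forall i, (i < n)%N -> subset_of (P i) (P i.+1) /\
                         exists x, P i.+1 x /\ ~ P i x).

Definition krull_dim (n : nat) : Prop :=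
  (exists P, prime_chain P n) /\ ~ (exists P, prime_chain P n.+1).

(* embedding dimension of (R, m) = n: dim_{R/m} (m/m^2) = n, i.e.
   there are x_0..x_{n-1} in m whose classes form an R/m-basis of m/m^2 *)
Definition embdim (m : R -> Prop) (n : nat) : Prop :=
  exists x : 'I_n -> R,
    [/\ (forall i, m (x i)),
        (forall r : 'I_n -> R, prod_ideal m m (\sum_i r i * x i) ->
           forall i, m (r i)) &
        (forall y, m y -> exists r : 'I_n -> R,
           prod_ideal m m (y - \sum_i r i * x i))].

Definition regular_local (m : R -> Prop) : Prop :=
  exists d, krull_dim d /\ embdim m d.

End CommAlg.

Section Maps.
Variables A B : comNzRingType.
Variable f : {rmorphism A -> B}.

Definition lies_over (Q : B -> Prop) (q : A -> Prop) :=
  forall a, Q (f a) <-> q a.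

Definition going_down : Prop :=
  forall (p q : A -> Prop) (Q : B -> Prop),
    prime_ideal p -> prime_ideal q -> subset_of p q ->
    prime_ideal Q -> lies_over Q q ->
    exists P : B -> Prop, [/\ prime_ideal P, subset_of P Q & lies_over P p].

Definition ext_ideal (I : A -> Prop) (b : B) : Prop :=
  exists s : seq (B * A), (forall p, p \in s -> I p.2) /\
    b = \sum_(p <- s) p.1 * f p.2.

Definition img (I : A -> Prop) (b : B) : Prop := exists a, I a /\ f a = b.
End Maps.

(* Main.v *)
From Pilot Require Import Defs.
From mathcomp Require Import all_boot all_order all_algebra.
From mathcomp Require Import fingroup perm zify ring.
From Stdlib Require Import Classical ClassicalEpsilon.
Import Order.TTheory GRing.Theory Num.Theory.
Import Pilot.Defs.
Local Open Scope ring_scope.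
Set Implicit Arguments. Unset Strict Implicit.

Section Ideals.
Variable R : comNzRingType.
Implicit Types I J : R -> Prop.

Lemma id0 I : is_ideal I -> I 0. Proof. by case. Qed.
Lemma idD I x y : is_ideal I -> I x -> I y -> I (x + y).
Proof. by case=> _ h _; apply: h. Qed.
Lemma idMl I r x : is_ideal I -> I x -> I (r * x).
Proof. by case=> _ _ h; apply: h. Qed.
Lemma idMr I r x : is_ideal I -> I x -> I (x * r).
Proof. by move=> hI hx; rewrite mulrC; apply: idMl. Qed.
Lemma idN I x : is_ideal I -> I x -> I (- x).
Proof. by move=> hI hx; rewrite -mulN1r; apply: idMl. Qed.
Lemma idB I x y : is_ideal I -> I x -> I y -> I (x - y).
Proof. by move=> hI hx hy; apply: idD => //; apply: idN. Qed.
Lemma idsum I (T : Type) (r : seq T) (P : pred T) (F : T -> R) :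
  is_ideal I -> (forall i, P i -> I (F i)) -> I (\sum_(i <- r | P i) F i).
Proof. move=> hI h; apply: big_ind => //; [exact: id0 | move=> x y; exact: idD]. Qed.

Lemma prod_is_ideal I J : is_ideal I -> is_ideal (prod_ideal I J).
Proof.
move=> hI; split.
- by exists [::]; rewrite big_nil.
- move=> x y [s [hs ->]] [t [ht ->]]; exists (s ++ t); rewrite big_cat; split=> //.
  by move=> p; rewrite mem_cat => /orP [] ?; [apply: hs | apply: ht].
- move=> r x [s [hs ->]]; exists [seq (r * p.1, p.2) | p <- s]; split.
    move=> p /mapP [q qs ->] /=; have [h1 h2] := hs q qs; split=> //; exact: idMl.
  by rewrite big_map big_distrr /=; apply: eq_bigr => p _; rewrite mulrA.
Qed.

Lemma prod_pair I J a b : I a -> J b -> prod_ideal I J (a * b).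
Proof. by move=> ha hb; exists [:: (a, b)]; rewrite big_seq1; split=> // p; rewrite inE => /eqP ->. Qed.

Lemma prod_sub I J : is_ideal I -> subset_of (prod_ideal I J) I.
Proof.
move=> hI x [s [hs ->]]; rewrite big_seq; apply: idsum => // p ps.
by have [h1 _] := hs p ps; apply: idMr.
Qed.

Lemma gen_sub I (s : seq R) x : is_ideal I -> (forall y, y \in s -> I y) ->
  gen_by s x -> I x.
Proof.
move=> hI hs [r [_ ->]]; apply: idsum => // i _; apply: idMl => //.
by apply: hs; apply: mem_nth.
Qed.

Lemma gen_mem (s : seq R) y : y \in s -> gen_by s y.
Proof.
move=> ys; exists (mkseq (fun j => (j == index y s)%:R) (size s)).
rewrite size_mkseq; split=> //.
have hi : (index y s < size s)%N by rewrite index_mem.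
rewrite (bigD1 (Ordinal hi)) //= nth_mkseq // eqxx mul1r nth_index // big1 ?addr0 //.
move=> j hj; rewrite nth_mkseq //; case: eqP => [hji|]; last by rewrite mul0r.
by exfalso; move: hj; apply/negP; rewrite negbK; apply/eqP/val_inj.
Qed.

Lemma max_above I : noetherian R -> proper_ideal I ->
  exists M, maximal_ideal M /\ subset_of I M.
Proof.
move=> hN hI; apply: NNPP => hno.
have step : forall J : {J : R -> Prop | proper_ideal J /\ subset_of I J},
  {J' : {J : R -> Prop | proper_ideal J /\ subset_of I J} |
     subset_of (proj1_sig J) (proj1_sig J') /\
     exists x, proj1_sig J' x /\ ~ proj1_sig J x}.
  move=> [J [pJ IJ]]; apply: constructive_indefinite_description.
  have : ~ maximal_ideal J by move=> mJ; apply: hno; exists J.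
  move=> nmJ; apply: NNPP => hne; apply: nmJ; split=> // J' pJ' JJ' x J'x.
  apply: NNPP => nJx; apply: hne.
  have IJ' : subset_of I J' by move=> y /IJ /JJ'.
  by exists (exist _ J' (conj pJ' IJ')); split=> //; exists x.
pose sq := fix sq k := if k is k'.+1 then proj1_sig (step (sq k')) else exist _ I (conj hI (fun x (h : I x) => h)).
have mono1 : forall k, subset_of (proj1_sig (sq k)) (proj1_sig (sq k.+1)).
  by move=> k; rewrite /=; case: (step (sq k)) => /= J' [].
have mono : forall k l, (k <= l)%N -> subset_of (proj1_sig (sq k)) (proj1_sig (sq l)).
  move=> k l; elim: l => [|l IH]; first by rewrite leqn0 => /eqP ->.
  rewrite leq_eqVlt => /orP [/eqP -> //| hkl] x hx; apply: mono1; exact: IH.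
have idk : forall k, is_ideal (proj1_sig (sq k)).
  by move=> k; case: (sq k) => J [[]].
pose U x := exists k, proj1_sig (sq k) x.
have hU : is_ideal U.
  split.
  - by exists 0%N; apply: id0.
  - move=> x y [k hx] [l hy]; exists (maxn k l); apply: idD => //.
      by apply: (mono k) => //; rewrite leq_maxl.
    by apply: (mono l) => //; rewrite leq_maxr.
  - by move=> r x [k hx]; exists k; apply: idMl.
have [s hs] := hN U hU.
have : forall l : seq R, (forall y, y \in l -> U y) ->
   exists K, forall y, y \in l -> proj1_sig (sq K) y.
  elim=> [|a l IH] hl; first by exists 0%N.
  have [K hK] := IH (fun y yl => hl y (mem_behead (s := a :: l) yl)).
  have [k hk] := hl a (mem_head _ _).
  exists (maxn k K) => y; rewrite inE => /orP [/eqP ->|yl].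
    by apply: (mono k) => //; rewrite leq_maxl.
  by apply: (mono K); [rewrite leq_maxr | apply: hK].
move=> /(_ s (fun y ys => proj2 (hs y) (gen_mem ys))) [K hK].
have sub : forall x, U x -> proj1_sig (sq K) x.
  by move=> x /hs; apply: gen_sub.
have [x [J'x nx]] := proj2 (proj2_sig (step (sq K))).
by apply: nx; apply: sub; exists K.+1.
Qed.
End Ideals.

Section Det.
Variable R : comNzRingType.
Variable n : R -> Prop.
Hypothesis hn : is_ideal n.

Lemma det_near1 N (M : 'M[R]_N) :
  (forall i j, n (M i j - (i == j)%:R)) -> n (\det M - 1).
Proof.
move=> hM; rewrite /determinant (bigD1 (1%g : 'S_N)) //= odd_perm1 expr0 mul1r addrAC.
apply: idD => //.
  apply: (big_ind (fun x => n (x - 1))); first by rewrite subrr; apply: id0.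
    move=> x y hx hy; have -> : x * y - 1 = x * (y - 1) + (x - 1) by ring.
    by apply: idD => //; apply: idMl.
  by move=> i _; rewrite perm1; move: (hM i i); rewrite eqxx.
apply: idsum => // s hs.
have /existsP [i hi] : [exists i, s i != i].
  apply: contraR hs => /existsPn h; apply/eqP/permP => i; rewrite perm1.
  by apply/eqP; move: (h i); rewrite negbK.
apply: idMl => //; rewrite (bigD1 i) //=; apply: idMr => //.
by move: (hM i (s i)); rewrite eq_sym (negbTE hi) subr0.
Qed.

Definition ext k (d : 'I_k -> R) (j : nat) : R :=
  if insub j is Some i then d i else 0.

Lemma ext_ord k (d : 'I_k -> R) (i : 'I_k) : ext d i = d i.
Proof. by rewrite /ext valK. Qed.

Lemma ext_out k (d : 'I_k -> R) (j : nat) : (k <= j)%N -> ext d j = 0.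
Proof. by move=> h; rewrite /ext insubN // -leqNgt. Qed.

Lemma ext_sum k N (d e : 'I_k -> R) : (k <= N)%N ->
  \sum_(j < N) ext d j * ext e j = \sum_(j < k) d j * e j.
Proof.
move=> kN; rewrite (eq_bigr (fun j : 'I_k => ext d j * ext e j)); last first.
  by move=> j _; rewrite !ext_ord.
rewrite [RHS](big_ord_widen N (fun j => ext d j * ext e j)) // [RHS]big_mkcond /=.
by apply: eq_bigr => j _; case: ltnP => // h; rewrite ext_out // mul0r.
Qed.

Lemma steinitz N k (z : 'I_N -> R) (w : 'I_k -> R) :
  ~ n 1 -> (k < N)%N ->
  (forall r, prod_ideal n n (\sum_i r i * z i) -> forall i, n (r i)) ->
  (forall y, n y -> exists r : 'I_N -> R, prod_ideal n n (y - \sum_i r i * z i)) ->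
  (forall j, n (w j)) ->
  (forall i, exists c : 'I_k -> R, prod_ideal n n (z i - \sum_j c j * w j)) -> False.
Proof.
move=> n1 kN zind zspan wn wspan.
have hP := prod_is_ideal n hn.
pose cf i := proj1_sig (constructive_indefinite_description _ (wspan i)).
have hcf i : prod_ideal n n (z i - \sum_j cf i j * w j).
  exact: proj2_sig (constructive_indefinite_description _ (wspan i)).
pose rb j := proj1_sig (constructive_indefinite_description _ (zspan _ (wn j))).
have hrb j : prod_ideal n n (w j - \sum_l rb j l * z l).
  exact: proj2_sig (constructive_indefinite_description _ (zspan _ (wn j))).
pose A := \matrix_(i < N, j < N) ext (cf i) j.
pose Bm := \matrix_(j < N, l < N) ext (fun j' => rb j' l) j.
have dA : \det A = 0.
  rewrite (expand_det_col A (Ordinal kN)) big1 // => i _.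
  by rewrite mxE ext_out // mul0r.
have hAB : forall i l, n ((A *m Bm) i l - (i == l)%:R).
  move=> i; apply: zind.
  pose Y (j' : 'I_k) := \sum_l rb j' l * z l.
  have e1 : \sum_l ((A *m Bm) i l - (i == l)%:R) * z l
          = \sum_j' cf i j' * Y j' - z i.
    rewrite (eq_bigr (fun l => (A *m Bm) i l * z l - (i == l)%:R * z l));
      last by move=> l _; rewrite mulrBl.
    rewrite sumrB; congr (_ - _); last first.
      rewrite (bigD1 i) //= eqxx mul1r big1 ?addr0 // => l hl.
      by rewrite eq_sym (negbTE hl) mul0r.
    rewrite (eq_bigr (fun l => \sum_j A i j * (Bm j l * z l))); last first.
      by move=> l _; rewrite mxE big_distrl /=; apply: eq_bigr => j _; rewrite mulrA.
    rewrite exchange_big /= -(ext_sum _ _ (ltnW kN)).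
    apply: eq_bigr => j _; rewrite -big_distrr /= mxE; congr (_ * _).
    rewrite /Y (eq_bigr (fun l => ext (rb^~ l) j * z l)); last by move=> l _; rewrite mxE.
    rewrite /ext; case: insub => [j'|] //.
    by rewrite big1 // => l _; rewrite mul0r.
  have e2 : \sum_j' cf i j' * Y j' - z i
          = - (z i - \sum_j cf i j * w j) - \sum_j cf i j * (w j - Y j).
    have -> : \sum_j cf i j * (w j - Y j) = \sum_j cf i j * w j - \sum_j cf i j * Y j.
      by rewrite -sumrB; apply: eq_bigr => j _; rewrite mulrBr.
    ring.
  rewrite e1 e2; apply: idB => //; first by apply: idN.
  by apply: idsum => // j _; apply: idMl.
have := det_near1 hAB; rewrite det_mulmx dA mul0r sub0r => /(idN hn).
by rewrite opprK.
Qed.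
End Det.

Section Edim.
Variables A B C : comNzRingType.
Variable f : {rmorphism A -> B}.
Variable g : {rmorphism B -> C}.
Variables (m : A -> Prop) (n : B -> Prop).
Hypotheses (hmI : is_ideal m) (hnI : is_ideal n) (hn1 : ~ n 1).
Hypothesis hmn : forall a, m a -> n (f a).
Hypothesis surj : forall c : C, exists b, g b = c.
Hypothesis ker : forall b, g b = 0 <-> ext_ideal f m b.

Lemma prod_map (I : A -> Prop) J a : (forall a, I a -> J (f a)) ->
  prod_ideal I I a -> prod_ideal J J (f a).
Proof.
move=> hIJ [s [hs ->]]; exists [seq (f p.1, f p.2) | p <- s]; split.
  by move=> p /mapP [q qs ->] /=; have [h1 h2] := hs q qs; split; apply: hIJ.
by rewrite rmorph_sum big_map; apply: eq_bigr => p _; rewrite rmorphM.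
Qed.

Lemma prod_lift c : prod_ideal (img g n) (img g n) c ->
  exists b, prod_ideal n n b /\ g b = c.
Proof.
move=> [s [hs ->]]; elim: s hs => [|p s IH] hs.
  by exists 0; split; [apply: id0; apply: prod_is_ideal | rewrite big_nil rmorph0].
have [b [hb gb]] := IH (fun q qs => hs q (mem_behead (s := p :: s) qs)).
have [[u [nu gu]] [v [nv gv]]] := hs p (mem_head _ _).
exists (u * v + b); split.
  by apply: idD; [apply: prod_is_ideal | apply: prod_pair | ].
by rewrite big_cons rmorphD rmorphM gu gv gb.
Qed.

Variables (eA : nat) (xA : 'I_eA -> A).
Hypothesis xAm : forall i, m (xA i).
Hypothesis xAspan : forall y, m y -> exists r : 'I_eA -> A,
           prod_ideal m m (y - \sum_i r i * xA i).

Lemma ext_span e : ext_ideal f m e ->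
  exists c : 'I_eA -> B, prod_ideal n n (e - \sum_i c i * f (xA i)).
Proof.
have hP := prod_is_ideal n hnI.
move=> [s [hs ->]]; elim: s hs => [|p s IH] hs.
  by exists (fun _ => 0); rewrite big_nil big1 ?subr0 //; [apply: id0 | move=> i _; rewrite mul0r].
have [c hc] := IH (fun q qs => hs q (mem_behead (s := p :: s) qs)).
have [r hr] := xAspan (hs p (mem_head _ _)).
exists (fun i => p.1 * f (r i) + c i).
have hfr := prod_map hmn hr.
rewrite rmorphB rmorph_sum /= in hfr.
have -> : \sum_(q <- p :: s) q.1 * f q.2 - \sum_i (p.1 * f (r i) + c i) * f (xA i)
  = p.1 * (f p.2 - \sum_i f (r i * xA i)) + (\sum_(q <- s) q.1 * f q.2 - \sum_i c i * f (xA i)).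
  rewrite big_cons (eq_bigr (fun i => p.1 * f (r i * xA i) + c i * f (xA i))); last first.
    by move=> i _; rewrite rmorphM mulrDl mulrA.
  rewrite big_split /= -big_distrr /=; ring.
by apply: idD => //; apply: idMl.
Qed.

Variables (eC : nat) (yC : 'I_eC -> C).
Hypothesis yCn : forall i, img g n (yC i).
Hypothesis yCspan : forall y, img g n y -> exists r : 'I_eC -> C,
           prod_ideal (img g n) (img g n) (y - \sum_i r i * yC i).

Definition yh i := sval (constructive_indefinite_description _ (yCn i)).
Lemma yh_n i : n (yh i). Proof. exact: (proj1 (proj2_sig (constructive_indefinite_description _ (yCn i)))). Qed.
Lemma yh_g i : g (yh i) = yC i. Proof. exact: (proj2 (proj2_sig (constructive_indefinite_description _ (yCn i)))). Qed.

Definition wfam (j : 'I_(eA + eC)) : B :=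
  match split j with inl i => f (xA i) | inr i => yh i end.

Lemma wfam_n j : n (wfam j).
Proof.
by rewrite /wfam; case: split => i; [apply: hmn; apply: xAm | exact: yh_n].
Qed.

Lemma split_l (i : 'I_eA) : split (lshift eC i) = inl i.
Proof. exact: (unsplitK (inl i : 'I_eA + 'I_eC)). Qed.
Lemma split_r (i : 'I_eC) : split (rshift eA i) = inr i.
Proof. exact: (unsplitK (inr i : 'I_eA + 'I_eC)). Qed.

Lemma span_all y : n y ->
  exists c : 'I_(eA + eC) -> B, prod_ideal n n (y - \sum_j c j * wfam j).
Proof.
have hP := prod_is_ideal n hnI.
move=> ny.
have gy : img g n (g y) by exists y.
have [r hr] := yCspan gy.
have [b [hb gb]] := prod_lift hr.
pose rh i := sval (constructive_indefinite_description _ (surj (r i))).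
have grh i : g (rh i) = r i := proj2_sig (constructive_indefinite_description _ (surj (r i))).
pose e := y - \sum_i rh i * yh i - b.
have ge : g e = 0.
  rewrite /e !rmorphB rmorph_sum gb.
  rewrite (eq_bigr (fun i => r i * yC i)); first by rewrite subrr.
  by move=> i _; rewrite rmorphM grh yh_g.
have [cA hcA] := ext_span (proj1 (ker e) ge).
exists (fun j => match split j with inl i => cA i | inr i => rh i end).
rewrite big_split_ord /=.
rewrite (eq_bigr (fun i : 'I_eA => cA i * f (xA i))); last by move=> i _; rewrite /wfam split_l.
rewrite (eq_bigr (fun i : 'I_eC => rh i * yh i)); last by move=> i _; rewrite /wfam split_r.
have -> : y - (\sum_i cA i * f (xA i) + \sum_i rh i * yh i)
   = (e - \sum_i cA i * f (xA i)) + b by rewrite /e; ring.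
by apply: idD.
Qed.
Lemma edim_le eB : embdim n eB -> (eB <= eA + eC)%N.
Proof.
move=> [z [zn zind zspan]]; rewrite leqNgt; apply/negP => lt.
apply: (@steinitz _ n hnI _ _ z wfam hn1 lt zind zspan wfam_n) => i.
exact: span_all (zn i).
Qed.
End Edim.

Lemma pull_prime (R1 R2 : comNzRingType) (phi : {rmorphism R1 -> R2}) (P : R2 -> Prop) :
  prime_ideal P -> prime_ideal (fun x => P (phi x)).
Proof.
move=> [[[h0 hD hM] h1] hp]; split; [split; [split|]|].
- by rewrite rmorph0.
- by move=> x y hx hy; rewrite rmorphD; apply: hD.
- by move=> r x hx; rewrite rmorphM; apply: hM.
- by rewrite rmorph1.
- by move=> a b; rewrite rmorphM; apply: hp.
Qed.

Lemma trunc_chain (R : comNzRingType) (P : nat -> R -> Prop) k l :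
  prime_chain P k -> (l <= k)%N -> prime_chain P l.
Proof.
move=> [h1 h2] lk; split=> i hi; [apply: h1 | apply: h2]; exact: leq_trans hi lk.
Qed.

Section Dim.
Variables A B C : comNzRingType.
Variable f : {rmorphism A -> B}.
Variable g : {rmorphism B -> C}.
Variables (m : A -> Prop).
Hypotheses (hNA : noetherian A) (hmloc : local_ring m).
Hypothesis gd : going_down f.
Hypothesis surj : forall c : C, exists b, g b = c.
Hypothesis ker : forall b, g b = 0 <-> ext_ideal f m b.

Lemma dim_le dA dB dC : krull_dim A dA -> krull_dim B dB -> krull_dim C dC ->
  (dA + dC <= dB)%N.
Proof.
move=> [[PA [hPA1 hPA2]] _] [_ hB] [[PC [hPC1 hPC2]] _].
have [[[hmI hm1] hmmax] hmuniq] := hmloc.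
pose Q' i b := PC i (g b).
have Q'p : forall i, (i <= dC)%N -> prime_ideal (Q' i).
  by move=> i hi; apply: (pull_prime g); apply: hPC1.
pose J a := Q' 0%N (f a).
have Jp : prime_ideal J by apply: (pull_prime f); apply: Q'p.
have mJ : subset_of m J.
  move=> a ma; rewrite /J /Q'.
  have -> : g (f a) = 0.
    apply/ker; exists [:: (1, a)]; split; first by move=> p; rewrite inE => /eqP ->.
    by rewrite big_seq1 mul1r.
  by have [[[]]] := hPC1 0%N (leq0n _).
have Jm : forall a, J a <-> m a.
  move=> a; split; last exact: mJ.
  by apply: hmmax => //; case: Jp.
have topm : subset_of (PA dA) J.
  have [[hpI hp1] _] := hPA1 dA (leqnn _).
  have [M [hM sub]] := max_above hNA (conj hpI hp1).
  by move=> x /sub /(proj1 (hmuniq M hM x)) /Jm.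
have chainR : forall j, (j <= dA)%N -> exists R : nat -> B -> Prop,
   [/\ forall i, (i <= j)%N -> prime_ideal (R i) /\ lies_over f (R i) (PA (dA - i)%N),
       subset_of (R 0%N) (Q' 0%N) &
       forall i, (i < j)%N -> subset_of (R i.+1) (R i)].
  elim=> [|j IH] hj.
    have [P [hP1 hP2 hP3]] := gd (hPA1 dA (leqnn _)) Jp topm (Q'p 0%N (leq0n _)) (fun a => iff_refl _).
    exists (fun _ => P); split=> //.
    by move=> i; rewrite leqn0 => /eqP ->; rewrite subn0.
  have [R [hR1 hR2 hR3]] := IH (ltnW hj).
  have [hRj1 hRj2] := hR1 j (leqnn _).
  have e : (dA - j = (dA - j.+1).+1)%N by lia.
  have sub : subset_of (PA (dA - j.+1)%N) (PA (dA - j)%N).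
    by rewrite e; apply: (proj1 (hPA2 _ _)); lia.
  have [P [hP1 hP2 hP3]] := gd (hPA1 _ (leq_subr _ _)) (hPA1 _ (leq_subr _ _)) sub hRj1 hRj2.
  exists (fun i => if i == j.+1 then P else R i); split.
  - move=> i hi; case: eqP => [->//|ne]; apply: hR1; lia.
  - by rewrite /=; apply: hR2.
  - move=> i hi; have -> : (i == j.+1) = false by apply/eqP; lia.
    rewrite eqSS; case: eqP => [-> | ne]; [exact: hP2 | apply: hR3; lia].
have [R [hR1 hR2 hR3]] := chainR dA (leqnn _).
pose T i := if (i <= dA)%N then R (dA - i)%N else Q' (i - dA)%N.
rewrite leqNgt; apply/negP => lt; apply: hB; exists T.
apply: (@trunc_chain _ T (dA + dC)); last by lia.
split.
  move=> i hi; rewrite /T; case: ifP => hiA.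
    by apply: (proj1 (hR1 _ _)); apply: leq_subr.
  apply: Q'p; lia.
move=> i hi; rewrite /T.
case: (ltngtP i dA) => hiA.
- have e : (dA - i = (dA - i.+1).+1)%N by lia.
  rewrite e; split; first by apply: hR3; lia.
  have [x [x1 x0]] := proj2 (hPA2 i hiA).
  exists (f x); split.
    have [_ lo] := hR1 (dA - i.+1)%N (leq_subr _ _).
    by apply/lo; have -> : (dA - (dA - i.+1) = i.+1)%N by lia.
  have hle : ((dA - i.+1).+1 <= dA)%N by lia.
  have [_ lo] := hR1 (dA - i.+1)%N.+1 hle.
  by move/lo; have -> : (dA - (dA - i.+1).+1 = i)%N by lia.
- have e : (i.+1 - dA = (i - dA).+1)%N by lia.
  have hle : (i - dA < dC)%N by lia.
  rewrite e; have hh := hPC2 (i - dA)%N hle.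
  split; first by move=> b; apply: (proj1 hh).
  have [x [x1 x0]] := proj2 hh; have [b gb] := surj x.
  by exists b; rewrite /Q' gb.
- subst i; rewrite subnn.
  have -> : (dA.+1 - dA = 1)%N by lia.
  have hle : (0 < dC)%N by lia.
  have hh := hPC2 0%N hle.
  split; first by move=> b /hR2; apply: (proj1 hh).
  have [x [x1 x0]] := proj2 hh; have [b gb] := surj x.
  by exists b; split; [rewrite /Q' gb | move/hR2; rewrite /Q' gb].
Qed.
End Dim.

Theorem corollary2p4 (A B C : comNzRingType)
  (f : {rmorphism A -> B}) (g : {rmorphism B -> C})
  (m : A -> Prop) (n : B -> Prop) :
  noetherian A -> local_ring m ->
  noetherian B -> local_ring n ->
  (forall a, m a -> n (f a)) ->
  going_down f ->
  (forall c : C, exists b, g b = c) ->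
  (forall b, g b = 0 <-> ext_ideal f m b) ->
  (forall (dA eA dB eB dC eC : nat),
     krull_dim A dA -> embdim m eA ->
     krull_dim B dB -> embdim n eB ->
     krull_dim C dC -> embdim (img g n) eC ->
     (eB%:Z - dB%:Z <= (eA%:Z - dA%:Z) + (eC%:Z - dC%:Z))%R) /\
  (regular_local (img g n) ->
   forall (dA eA dB eB : nat),
     krull_dim A dA -> embdim m eA ->
     krull_dim B dB -> embdim n eB ->
     (eB%:Z - dB%:Z <= eA%:Z - dA%:Z)%R).
Proof.
move=> hNA hmloc hNB hnloc hmn gd surj ker.
have [[[hnI hn1] _] _] := hnloc.
have partA : forall (dA eA dB eB dC eC : nat),
     krull_dim A dA -> embdim m eA ->
     krull_dim B dB -> embdim n eB ->
     krull_dim C dC -> embdim (img g n) eC ->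
     (eB%:Z - dB%:Z <= (eA%:Z - dA%:Z) + (eC%:Z - dC%:Z))%R.
  move=> dA eA dB eB dC eC kA [xA [xAm _ xAspan]] kB eBd kC [yC [yCn _ yCspan]].
  have h1 := edim_le hnI hn1 hmn surj ker xAm xAspan yCn yCspan eBd.
  have h2 := dim_le hNA hmloc gd surj ker kA kB kC.
  lia.
split=> //.
move=> [d [kC eCd]] dA eA dB eB kA eAd kB eBd.
have := partA dA eA dB eB d d kA eAd kB eBd kC eCd.
lia.
Qed.
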